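(* For all real $t\neq 0$, \[ \frac{\pi^2+\left(4-\frac{\pi^2}{3}\right)t^2-\left(\frac43-\frac{128}{\pi^4}\right)t^4}{\pi^2+4t^2}<\frac{\tanh t}{t}<\frac{\pi^2+\left(4-\frac{\pi^2}{3}\right)t^2-\left(\frac43-\frac{2\pi^2}{15}\right)t^4+\left(\frac{8}{15}-\frac{512}{\pi^6}\right)t^6}{\pi^2+4t^2}. \] *)

(* Defs.v *)
From Stdlib Require Import Reals.

(* Main.v *)
Require Import Defs.
From Stdlib Require Import Reals Lra Psatz Machin.
From Coquelicot Require Import Coquelicot.
Open Scope R_scope.

Lemma PI_bnd : 3141592/1000000 < PI < 3141593/1000000.
Proof.
  pose proof (PI_2_3_7_ineq 3) as [H1 H2].
  unfold sum_f_R0, tg_alt, PI_2_3_7_tg, Ratan_seq in H1, H2.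
  simpl in H1, H2.
  lra.
Qed.

Lemma pk_bnd (k : nat) :
  (3141592/1000000)^(2*k) <= (PI^2)^k <= (3141593/1000000)^(2*k).
Proof. pose proof PI_bnd as [h1 h2]. rewrite <- pow_mult. split; apply pow_incr; lra. Qed.

Definition pp := PI^2.
Definition AA := 128/pp^2.
Definition BB := 512/pp^3.
Definition DD t := pp + 4*t^2.
Definition CH t := (exp t + exp(-t))/2.
Definition SH t := (exp t - exp(-t))/2.
Definition PP t := t - t^3/3 + AA*t^5/DD t.
Definition MM t := t^2/2 - t^4/12 + AA*(t^4/16 - pp*t^2/32 + pp^2*ln(DD t)/128).
Definition Phi t := (SH t - PP t * CH t) * exp (MM t).
Definition GG t := 1 - (1 - t^2 + AA*(5*pp*t^4+12*t^6)/(DD t)^2) - PP t ^2.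
Definition QQ t := t - t^3/3 + 2*t^5/15 - BB*t^7/DD t.
Definition NN t := t^2/2 - t^4/12 + t^6/45
   - BB*(t^6/24 - pp*t^4/64 + pp^2*t^2/128 - pp^3*ln(DD t)/512).
Definition Psi t := (QQ t * CH t - SH t) * exp (NN t).
Definition HH t := (1 - t^2 + 2*t^4/3 - BB*(7*pp*t^6 + 20*t^8)/(DD t)^2) - 1 + QQ t ^2.

Lemma pp_pos : 0 < pp.
Proof. unfold pp. pose proof PI_RGT_0. nra. Qed.
Lemma DD_pos t : 0 < DD t.
Proof. unfold DD. pose proof pp_pos. nra. Qed.
Lemma CH_pos t : 0 < CH t.
Proof. unfold CH. pose proof (exp_pos t). pose proof (exp_pos (-t)). lra. Qed.

Lemma Phi_deriv t : is_derive Phi t (CH t * GG t * exp (MM t)).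
Proof.
  pose proof (DD_pos t) as hD. pose proof pp_pos as hp.
  unfold Phi, GG, MM, PP, CH, SH, AA in *. unfold DD in *.
  auto_derive.
  - lra.
  - match goal with |- ?a = ?b => change (@eq R a b) end.
    set (e1 := exp t). set (e2 := exp (- t)). set (E := exp _). field; lra.
Qed.

Lemma Psi_deriv t : is_derive Psi t (CH t * HH t * exp (NN t)).
Proof.
  pose proof (DD_pos t) as hD. pose proof pp_pos as hp.
  unfold Psi, HH, NN, QQ, CH, SH, BB in *. unfold DD in *.
  auto_derive.
  - lra.
  - match goal with |- ?a = ?b => change (@eq R a b) end.
    set (e1 := exp t). set (e2 := exp (- t)). set (E := exp _). field; lra.
Qed.

Lemma GG_id t : GG t * (DD t)^2 * pp^4 = t^4 * (
   (2/3*pp^6 - 640*pp^3)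
 + (16/3*pp^5 - 256*pp^3 - 1536*pp^2 - pp^6/9) * t^2
 + (32/3*pp^4 + 256/3*pp^3 - 1024*pp^2 - 8/9*pp^5) * (t^2)^2
 - (4/3*pp^2 - 128)^2 * (t^2)^3).
Proof.
  pose proof (DD_pos t) as hD. pose proof pp_pos as hp.
  unfold GG, PP, AA. unfold DD in *. field; lra.
Qed.

Lemma HH_id t : HH t * (DD t)^2 * pp^6 = t^6 * (
   (17/45*pp^8 - 3584*pp^4)
 + (136/45*pp^7 - 4/45*pp^8 - 1024*pp^4 - 10240*pp^3) * t^2
 + (4/225*pp^8 - 32/45*pp^7 + 272/45*pp^6 + 1024/3*pp^4 - 4096*pp^3) * (t^2)^2
 + (32/225*pp^7 - 64/45*pp^6 - 2048/15*pp^4 + 4096/3*pp^3) * (t^2)^3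
 + (8/15*pp^3 - 512)^2 * (t^2)^4).
Proof.
  pose proof (DD_pos t) as hD. pose proof pp_pos as hp.
  unfold HH, QQ, BB. unfold DD in *. field; lra.
Qed.

Lemma coef_bnds :
  888 <= 2/3*pp^6 - 640*pp^3 /\
  1022 <= 16/3*pp^5 - 256*pp^3 - 1536*pp^2 - pp^6/9 /\
  259 <= 32/3*pp^4 + 256/3*pp^3 - 1024*pp^2 - 8/9*pp^5 /\
  1878/1000 <= 4/3*pp^2 - 128 <= 1879/1000 /\
  5133 <= 17/45*pp^8 - 3584*pp^4 /\
  5373 <= 136/45*pp^7 - 4/45*pp^8 - 1024*pp^4 - 10240*pp^3 /\
  1253 <= 4/225*pp^8 - 32/45*pp^7 + 272/45*pp^6 + 1024/3*pp^4 - 4096*pp^3 /\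
  -34 <= 32/225*pp^7 - 64/45*pp^6 - 2048/15*pp^4 + 4096/3*pp^3 /\
  74/100 <= 8/15*pp^3 - 512 /\
  9869/1000 <= pp <= 9870/1000 /\ 961 <= pp^3 <= 962 /\ 97 <= pp^2 <= 98.
Proof.
  pose proof (pk_bnd 1). pose proof (pk_bnd 2). pose proof (pk_bnd 3).
  pose proof (pk_bnd 4). pose proof (pk_bnd 5). pose proof (pk_bnd 6).
  pose proof (pk_bnd 7). pose proof (pk_bnd 8).
  fold pp in *. simpl in *.
  repeat split; lra.
Qed.

Lemma GG_pos t : 0 < t <= 8 -> 0 < GG t.
Proof.
  intros ht.
  pose proof (GG_id t) as E.
  pose proof coef_bnds as (g0 & g1 & g2 & r & _).
  set (u := t^2) in E.
  assert (hu : 0 < u <= 64) by (unfold u; nra).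
  set (c0 := 2/3*pp^6 - 640*pp^3) in *.
  set (c1 := 16/3*pp^5 - 256*pp^3 - 1536*pp^2 - pp^6/9) in *.
  set (c2 := 32/3*pp^4 + 256/3*pp^3 - 1024*pp^2 - 8/9*pp^5) in *.
  set (rr := 4/3*pp^2 - 128) in *.
  assert (hr2 : rr^2 <= 36/10) by nra.
  assert (hg : 0 < c0 + c1*u + c2*u^2 - rr^2*u^3).
  { assert (rr^2*u^3 <= 36/10*64*u^2).
    { replace (u^3) with (u*u^2) by ring.
      assert (0 <= u^2) by nra.
      assert (rr^2 * u <= 36/10*64) by nra. nra. }
    nra. }
  assert (ht4 : 0 < t^4) by (apply pow_lt; lra).
  assert (hD : 0 < (DD t)^2 * pp^4).
  { pose proof (DD_pos t). pose proof pp_pos. apply Rmult_lt_0_compat; apply pow_lt; lra. }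
  assert (0 < GG t * ((DD t)^2 * pp^4)).
  { rewrite <- Rmult_assoc, E. apply Rmult_lt_0_compat; auto. }
  nra.
Qed.

Lemma HH_pos t : 0 < t -> 0 < HH t.
Proof.
  intros ht.
  pose proof (HH_id t) as E.
  pose proof coef_bnds as (_ & _ & _ & _ & h0 & h1 & h2 & h3 & s & _).
  set (u := t^2) in E.
  assert (hu : 0 < u) by (unfold u; nra).
  set (c0 := 17/45*pp^8 - 3584*pp^4) in *.
  set (c1 := 136/45*pp^7 - 4/45*pp^8 - 1024*pp^4 - 10240*pp^3) in *.
  set (c2 := 4/225*pp^8 - 32/45*pp^7 + 272/45*pp^6 + 1024/3*pp^4 - 4096*pp^3) in *.
  set (c3 := 32/225*pp^7 - 64/45*pp^6 - 2048/15*pp^4 + 4096/3*pp^3) in *.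
  set (ss := 8/15*pp^3 - 512) in *.
  assert (hs2 : 5476/10000 <= ss^2) by nra.
  assert (hq : 0 < c2 + c3*u + ss^2*u^2).
  { assert (c3*u >= -34*u) by nra.
    assert (ss^2*u^2 >= 5476/10000*u^2) by nra. nra. }
  assert (hg : 0 < c0 + c1*u + c2*u^2 + c3*u^3 + ss^2*u^4).
  { replace (c0 + c1*u + c2*u^2 + c3*u^3 + ss^2*u^4)
      with (c0 + c1*u + u^2*(c2 + c3*u + ss^2*u^2)) by ring.
    assert (0 < u^2) by nra. nra. }
  assert (ht6 : 0 < t^6) by (apply pow_lt; lra).
  assert (hD : 0 < (DD t)^2 * pp^6).
  { pose proof (DD_pos t). pose proof pp_pos. apply Rmult_lt_0_compat; apply pow_lt; lra. }
  assert (0 < HH t * ((DD t)^2 * pp^6)).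
  { rewrite <- Rmult_assoc, E. apply Rmult_lt_0_compat; auto. }
  nra.
Qed.

Lemma PP_neg t : 8 <= t -> PP t < 0.
Proof.
  intros ht.
  pose proof coef_bnds as (_ & _ & _ & r & _ & _ & _ & _ & _ & p1 & p3 & p2).
  assert (E : PP t * DD t * pp^2 = t * (pp^3 + (4*pp^2 - pp^3/3)*t^2 - (4/3*pp^2 - 128)*(t^2)^2)).
  { pose proof (DD_pos t). pose proof pp_pos. unfold PP, AA. unfold DD in *. field; lra. }
  set (u := t^2) in E.
  assert (hu : 64 <= u) by (unfold u; nra).
  set (rr := 4/3*pp^2 - 128) in *.
  assert (hn : pp^3 + (4*pp^2 - pp^3/3)*u - rr*u^2 < 0).
  { assert (rr*u^2 >= 1878/1000*64*u) by nra. nra. }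
  assert (hD : 0 < DD t * pp^2).
  { pose proof (DD_pos t). pose proof pp_pos. apply Rmult_lt_0_compat; [lra| apply pow_lt; lra]. }
  assert (PP t * (DD t * pp^2) < 0).
  { rewrite <- Rmult_assoc, E. nra. }
  nra.
Qed.

Lemma lower_tanh t : 0 < t -> PP t < SH t / CH t.
Proof.
  intros ht. pose proof (CH_pos t) as hc.
  destruct (Rle_lt_dec t 8) as [h8 | h8].
  - destruct (MVT_cor2 Phi (fun c => CH c * GG c * exp (MM c)) 0 t ht) as [c [Ec Hc]].
    { intros c _. apply is_derive_Reals. apply Phi_deriv. }
    assert (Phi 0 = 0).
    { unfold Phi, SH, PP. rewrite Ropp_0. unfold Rdiv. ring. }
    assert (0 < CH c * GG c * exp (MM c)).
    { pose proof (CH_pos c). pose proof (GG_pos c ltac:(lra)). pose proof (exp_pos (MM c)).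
      apply Rmult_lt_0_compat; [apply Rmult_lt_0_compat|]; lra. }
    assert (hP : 0 < Phi t) by nra.
    unfold Phi in hP. pose proof (exp_pos (MM t)).
    assert (0 < SH t - PP t * CH t) by nra.
    apply Rlt_div_r; [lra|]. lra.
  - pose proof (PP_neg t ltac:(lra)).
    assert (0 < SH t).
    { unfold SH. assert (exp (-t) < exp t) by (apply exp_increasing; lra). lra. }
    assert (0 < SH t / CH t) by (apply Rdiv_lt_0_compat; lra). lra.
Qed.

Lemma upper_tanh t : 0 < t -> SH t / CH t < QQ t.
Proof.
  intros ht. pose proof (CH_pos t) as hc.
  destruct (MVT_cor2 Psi (fun c => CH c * HH c * exp (NN c)) 0 t ht) as [c [Ec Hc]].
  { intros c _. apply is_derive_Reals. apply Psi_deriv. }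
  assert (Psi 0 = 0).
  { unfold Psi, SH, QQ. rewrite Ropp_0. unfold Rdiv. ring. }
  assert (0 < CH c * HH c * exp (NN c)).
  { pose proof (CH_pos c). pose proof (HH_pos c ltac:(lra)). pose proof (exp_pos (NN c)).
    apply Rmult_lt_0_compat; [apply Rmult_lt_0_compat|]; lra. }
  assert (hP : 0 < Psi t) by nra.
  unfold Psi in hP. pose proof (exp_pos (NN t)).
  assert (0 < QQ t * CH t - SH t) by nra.
  apply Rlt_div_l; [lra|]. lra.
Qed.

Lemma pos_case (t : R) (ht : 0 < t) :
  (PI ^ 2 + (4 - PI ^ 2 / 3) * t ^ 2 - (4 / 3 - 128 / PI ^ 4) * t ^ 4)
      / (PI ^ 2 + 4 * t ^ 2)
  < tanh t / t /\
  tanh t / t <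
  (PI ^ 2 + (4 - PI ^ 2 / 3) * t ^ 2 - (4 / 3 - 2 * PI ^ 2 / 15) * t ^ 4
     + (8 / 15 - 512 / PI ^ 6) * t ^ 6)
      / (PI ^ 2 + 4 * t ^ 2).
Proof.
  pose proof (DD_pos t) as hD. pose proof PI_RGT_0 as hpi.
  assert (Et : tanh t = SH t / CH t) by reflexivity.
  rewrite Et.
  pose proof (lower_tanh t ht). pose proof (upper_tanh t ht).
  unfold DD, pp in hD.
  replace ((PI ^ 2 + (4 - PI ^ 2 / 3) * t ^ 2 - (4 / 3 - 128 / PI ^ 4) * t ^ 4)
      / (PI ^ 2 + 4 * t ^ 2)) with (PP t / t)
    by (unfold PP, AA, DD, pp; field; lra).
  replace ((PI ^ 2 + (4 - PI ^ 2 / 3) * t ^ 2 - (4 / 3 - 2 * PI ^ 2 / 15) * t ^ 4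
     + (8 / 15 - 512 / PI ^ 6) * t ^ 6) / (PI ^ 2 + 4 * t ^ 2)) with (QQ t / t)
    by (unfold QQ, BB, DD, pp; field; lra).
  split; apply Rmult_lt_compat_r; try (apply Rinv_0_lt_compat; lra); lra.
Qed.

Theorem mainTheorem16 (t : R) (ht : t <> 0) :
  (PI ^ 2 + (4 - PI ^ 2 / 3) * t ^ 2 - (4 / 3 - 128 / PI ^ 4) * t ^ 4)
      / (PI ^ 2 + 4 * t ^ 2)
  < tanh t / t /\
  tanh t / t <
  (PI ^ 2 + (4 - PI ^ 2 / 3) * t ^ 2 - (4 / 3 - 2 * PI ^ 2 / 15) * t ^ 4
     + (8 / 15 - 512 / PI ^ 6) * t ^ 6)
      / (PI ^ 2 + 4 * t ^ 2).
Proof.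
  destruct (Rlt_or_le 0 t) as [hp | hn].
  - apply pos_case; exact hp.
  - assert (hs : 0 < - t) by lra.
    pose proof (pos_case (- t) hs) as H.
    assert (E : tanh (- t) / (- t) = tanh t / t).
    { unfold tanh, sinh, cosh. rewrite Ropp_involutive.
      pose proof (exp_pos t). pose proof (exp_pos (-t)). field. lra. }
    rewrite E in H.
    replace ((- t) ^ 2) with (t ^ 2) in H by ring.
    replace ((- t) ^ 4) with (t ^ 4) in H by ring.
    replace ((- t) ^ 6) with (t ^ 6) in H by ring.
    exact H.
Qed.
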